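(* Let $n\ge 3$ and $d=\lfloor n/2\rfloor$. Let $x\in Gr^{>0}(2,n)$ be a minimizer of $E$ on $Gr^{>0}(2,n)$, and let $X$ be a spanning matrix of $x$ with all $\Delta_{i,j}(X)>0$ ($i<j$), scaled so that $D_1=\sin(\pi/n)$. Then: (1) $D_k=s_k$ for all $k\in\{1,\dots,n-1\}$; (2) $s_1\le \Delta_{i,j}(X)\le s_d$ for all $1\le i<j\le n$; (3) $\Delta_{i,j}(X)=s_1$ for all $(i,j)\in O_1$ and $\Delta_{i,j}(X)=s_d$ for all $(i,j)\in O_d$.
   Context: For a real $2\times n$ matrix $X$ and $1\le i<j\le n$, $\Delta_{i,j}(X)$ is the determinant of the $2\times2$ submatrix of columns $i,j$. $Gr^{>0}(2,n)$ is the set of 2-dimensional subspaces of $\mathbb{R}^n$ having a spanning $2\times n$ matrix $X$ (rows spanning the subspace) with $\Delta_{i,j}(X)>0$ for all $i<j$; $E(x)=\max_{i<j}\Delta_{i,j}(X)/\min_{i<j}\Delta_{i,j}(X)$. Set $s_k=\sin(k\pi/n)$. Let $\sigma$ act on strictly increasing pairs $(i,j)$, $1\le i<j\le n$, by $\sigma(i,j)=(i+1,j+1)$ if $j<n$ and $\sigma(i,n)=(1,i+1)$. For $k\in\{1,\dots,n-1\}$ the $k$-th orbit is the multiset $O_k=\{\sigma^m(1,k+1): m=0,\dots,n-1\}$, and $D_k=\left(\prod_{m=0}^{n-1}\Delta_{\sigma^m(1,k+1)}(X)\right)^{1/n}$ is the geometric mean of the coordinates over $O_k$. *)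

(* Defs.v *)
From Stdlib Require Import Reals Lra Lia List Arith.
Import ListNotations.
Open Scope R_scope.

(* A real 2 x n matrix X is given by its two rows [r1 r2 : nat -> R];
   column i (1 <= i <= n) is (r1 i, r2 i). Values outside 1..n are irrelevant. *)

Definition Dij (r1 r2 : nat -> R) (p : nat * nat) : R :=
  r1 (fst p) * r2 (snd p) - r1 (snd p) * r2 (fst p).

Definition pairs (n : nat) : list (nat * nat) :=
  flat_map (fun i => map (fun j => (i, j)) (seq (S i) (n - i))) (seq 1 n).

Definition totally_positive (n : nat) (r1 r2 : nat -> R) : Prop :=
  forall i j : nat, (1 <= i)%nat -> (i < j)%nat -> (j <= n)%nat ->
    0 < Dij r1 r2 (i, j).

Definition maxDelta (n : nat) (r1 r2 : nat -> R) : R :=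
  fold_right Rmax 0 (map (Dij r1 r2) (pairs n)).

(* minimum over the (nonempty, for n >= 2) list of coordinates; the default
   value maxDelta is itself an element of the list, so this is the true min. *)
Definition minDelta (n : nat) (r1 r2 : nat -> R) : R :=
  fold_right Rmin (maxDelta n r1 r2) (map (Dij r1 r2) (pairs n)).

Definition Eratio (n : nat) (r1 r2 : nat -> R) : R :=
  maxDelta n r1 r2 / minDelta n r1 r2.

Definition s (n k : nat) : R := sin (INR k * PI / INR n).

Definition sigmaP (n : nat) (p : nat * nat) : nat * nat :=
  if Nat.ltb (snd p) n then (S (fst p), S (snd p)) else (1%nat, S (fst p)).

(* O_k = [sigmaP^m (1,k+1) | m = 0..n-1] (as a list = multiset) *)
Definition orbit (n k : nat) : list (nat * nat) :=
  map (fun m => Nat.iter m (sigmaP n) (1%nat, S k)) (seq 0 n).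

Definition prodR (l : list R) : R := fold_right Rmult 1 l.

Definition Dk (n k : nat) (r1 r2 : nat -> R) : R :=
  Rpower (prodR (map (Dij r1 r2) (orbit n k))) (1 / INR n).

(* Main.v *)
Require Import Defs.
From Stdlib Require Import Reals Lra Lia List Arith.
Open Scope R_scope.

Fixpoint SL (l : list nat) (f : nat -> R) : R :=
  match l with nil => 0 | t :: l' => f t + SL l' f end.

Lemma SL_ext l f g : (forall t, In t l -> f t = g t) -> SL l f = SL l g.
Proof.
  induction l as [|a l IH]; simpl; intros H; [reflexivity|].
  rewrite H by auto. rewrite IH by auto. reflexivity.
Qed.

Lemma SL_plus l f g : SL l (fun t => f t + g t) = SL l f + SL l g.
Proof. induction l; simpl; [lra|]. rewrite IHl. lra. Qed.

Lemma SL_minus l f g : SL l (fun t => f t - g t) = SL l f - SL l g.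
Proof. induction l; simpl; [lra|]. rewrite IHl. lra. Qed.

Lemma SL_const l f c : SL l (fun t => f t + c) = SL l f + INR (length l) * c.
Proof. induction l; simpl length; simpl SL; [simpl; lra|]. rewrite IHl, S_INR. lra. Qed.

Lemma SL_le l f g : (forall t, In t l -> f t <= g t) -> SL l f <= SL l g.
Proof.
  induction l as [|a l IH]; simpl; intros H; [lra|].
  assert (f a <= g a) by auto. assert (SL l f <= SL l g) by auto. lra.
Qed.

Lemma SL_app l1 l2 f : SL (l1 ++ l2) f = SL l1 f + SL l2 f.
Proof. induction l1; simpl; [lra|]. rewrite IHl1. lra. Qed.

Lemma SL_seqS a m f : SL (seq a m) (fun t => f (S t)) = SL (seq (S a) m) f.
Proof. revert a; induction m; intros a; simpl; [reflexivity|]. rewrite IHm. reflexivity. Qed.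

Lemma SL_shift1 n f : (forall t, f (t + n)%nat = f t) ->
  SL (seq 0 n) (fun t => f (t + 1)%nat) = SL (seq 0 n) f.
Proof.
  intros Hp. destruct n as [|n']; [reflexivity|].
  rewrite (SL_ext _ _ (fun t => f (S t))) by (intros; f_equal; lia).
  rewrite SL_seqS, seq_S, SL_app. simpl.
  rewrite <- (SL_seqS 0 n' f).
  specialize (Hp 0%nat). simpl in Hp. rewrite Hp. lra.
Qed.

Lemma SL_shift n f j : (forall t, f (t + n)%nat = f t) ->
  SL (seq 0 n) (fun t => f (t + j)%nat) = SL (seq 0 n) f.
Proof.
  intros Hp. induction j.
  - apply SL_ext. intros; f_equal; lia.
  - rewrite <- IHj.
    rewrite <- (SL_shift1 n (fun u => f (u + j)%nat)).
    + apply SL_ext; intros; f_equal; lia.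
    + intros t. replace (t + n + j)%nat with (t + j + n)%nat by lia. apply Hp.
Qed.

Lemma prod_pos l (f : nat -> R) : (forall t, In t l -> 0 < f t) -> 0 < prodR (map f l).
Proof.
  induction l as [|a l IH]; simpl; intros H; [lra|].
  apply Rmult_lt_0_compat; auto.
Qed.

Lemma ln_prod l (f : nat -> R) : (forall t, In t l -> 0 < f t) ->
  ln (prodR (map f l)) = SL l (fun t => ln (f t)).
Proof.
  induction l as [|a l IH]; simpl; intros H; [apply ln_1|].
  rewrite ln_mult; auto. rewrite IH; auto. apply prod_pos; auto.
Qed.

Lemma amgm l (u : nat -> R) : (0 < length l)%nat -> (forall t, In t l -> 0 < u t) ->
  exp (SL l (fun t => ln (u t)) / INR (length l)) <= SL l u / INR (length l).
Proof.
  intros HN Hu. set (N := INR (length l)).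
  assert (HN' : 0 < N) by (apply lt_0_INR; auto).
  remember (exp (SL l (fun t => ln (u t)) / N)) as g eqn:Eg.
  assert (Hg : 0 < g) by (rewrite Eg; apply exp_pos).
  assert (Hlg : ln g = SL l (fun t => ln (u t)) / N) by (rewrite Eg; apply ln_exp).
  assert (H : SL l (fun t => ln (u t) - ln g + 1) <= SL l (fun t => u t / g)).
  { apply SL_le. intros t Ht.
    pose proof (exp_ineq1_le (ln (u t) - ln g)) as He.
    unfold Rminus in He. rewrite exp_plus, exp_ln, exp_Ropp, exp_ln in He; auto.
    unfold Rdiv. lra. }
  rewrite SL_const, SL_minus in H. fold N in H.
  assert (Hc : forall c, SL l (fun _ => c) = N * c).
  { intro c. unfold N. clear. induction l; simpl SL; simpl length; [simpl; lra|].
    rewrite IHl, S_INR. lra. }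
  rewrite Hc in H. rewrite Hlg in H.
  assert (Hd : SL l (fun t => u t / g) = SL l u / g).
  { clear. induction l; simpl; [unfold Rdiv; lra|]. rewrite IHl. unfold Rdiv. lra. }
  rewrite Hd in H.
  replace (SL l (fun t : nat => ln (u t)) - N * (SL l (fun t : nat => ln (u t)) / N) + N * 1)
    with N in H by (field; lra).
  apply Rmult_le_reg_r with (N * / g).
  { apply Rmult_lt_0_compat; [lra| apply Rinv_0_lt_compat; lra]. }
  replace (g * (N * / g)) with N by (field; lra).
  replace (SL l u / N * (N * / g)) with (SL l u / g) by (field; lra).
exact H. Qed.

Lemma holder l (a b : nat -> R) : (0 < length l)%nat ->
  (forall t, In t l -> 0 < a t) -> (forall t, In t l -> 0 < b t) ->
  exp (SL l (fun t => ln (a t)) / INR (length l)) + exp (SL l (fun t => ln (b t)) / INR (length l))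
  <= exp (SL l (fun t => ln (a t + b t)) / INR (length l)).
Proof.
  intros HN Ha Hb. set (N := INR (length l)).
  assert (HN' : 0 < N) by (apply lt_0_INR; auto).
  set (G := exp (SL l (fun t => ln (a t + b t)) / N)).
  assert (HG : 0 < G) by apply exp_pos.
  assert (Hu := amgm l (fun t => a t / (a t + b t)) HN).
  assert (Hv := amgm l (fun t => b t / (a t + b t)) HN).
  fold N in Hu, Hv.
  assert (Hlu : SL l (fun t => ln (a t / (a t + b t))) = SL l (fun t => ln (a t)) - SL l (fun t => ln (a t + b t))).
  { rewrite <- SL_minus. apply SL_ext. intros t Ht. unfold Rdiv.
    pose proof (Ha t Ht); pose proof (Hb t Ht).
    rewrite ln_mult, ln_Rinv; try lra. apply Rinv_0_lt_compat; lra. }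
  assert (Hlv : SL l (fun t => ln (b t / (a t + b t))) = SL l (fun t => ln (b t)) - SL l (fun t => ln (a t + b t))).
  { rewrite <- SL_minus. apply SL_ext. intros t Ht. unfold Rdiv.
    pose proof (Ha t Ht); pose proof (Hb t Ht).
    rewrite ln_mult, ln_Rinv; try lra. apply Rinv_0_lt_compat; lra. }
  assert (Hsum : SL l (fun t => a t / (a t + b t)) + SL l (fun t => b t / (a t + b t)) = N).
  { rewrite <- SL_plus. unfold N.
    rewrite (SL_ext _ _ (fun t => (fun _ => 0) t + 1)).
    - rewrite SL_const. replace (SL l (fun _ => 0)) with 0. lra.
      clear. induction l; simpl; lra.
    - intros t Ht. pose proof (Ha t Ht); pose proof (Hb t Ht). field. lra. }
  assert (Ea : exp (SL l (fun t => ln (a t)) / N) = G * exp (SL l (fun t => ln (a t / (a t + b t))) / N)).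
  { unfold G. rewrite <- exp_plus, Hlu. f_equal. field. lra. }
  assert (Eb : exp (SL l (fun t => ln (b t)) / N) = G * exp (SL l (fun t => ln (b t / (a t + b t))) / N)).
  { unfold G. rewrite <- exp_plus, Hlv. f_equal. field. lra. }
  rewrite Ea, Eb.
  assert (Hu' : exp (SL l (fun t => ln (a t / (a t + b t))) / N) <= SL l (fun t => a t / (a t + b t)) / N).
  { apply Hu. intros t Ht. pose proof (Ha t Ht); pose proof (Hb t Ht).
    apply Rdiv_lt_0_compat; lra. }
  assert (Hv' : exp (SL l (fun t => ln (b t / (a t + b t))) / N) <= SL l (fun t => b t / (a t + b t)) / N).
  { apply Hv. intros t Ht. pose proof (Ha t Ht); pose proof (Hb t Ht).
    apply Rdiv_lt_0_compat; lra. }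
  assert (G * (SL l (fun t => a t / (a t + b t)) / N + SL l (fun t => b t / (a t + b t)) / N) = G).
  { replace (SL l (fun t => a t / (a t + b t)) / N + SL l (fun t => b t / (a t + b t)) / N) with 1.
    lra. rewrite <- Rdiv_plus_distr, Hsum. field. lra. }
  nra.
Qed.

Definition ee (n : nat) (r : nat -> R) (t : nat) : R := (-1) ^ (t / n) * r (t mod n + 1)%nat.
Definition DD n r1 r2 t u := ee n r1 t * ee n r2 u - ee n r1 u * ee n r2 t.

Lemma ee_per n r t : (n <> 0)%nat -> ee n r (t + n) = - ee n r t.
Proof.
  intros Hn. unfold ee.
  replace (t + n)%nat with (t + 1 * n)%nat by lia.
  rewrite Nat.div_add, Nat.Div0.mod_add by lia.
  rewrite Nat.add_1_r. simpl pow. ring.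
Qed.

Lemma DD_per n r1 r2 t u : (n <> 0)%nat -> DD n r1 r2 (t + n) (u + n) = DD n r1 r2 t u.
Proof. intros Hn. unfold DD. rewrite !ee_per by auto. ring. Qed.

Lemma DD_perq n r1 r2 t u q : (n <> 0)%nat ->
  DD n r1 r2 (t + q * n) (u + q * n) = DD n r1 r2 t u.
Proof.
  intros Hn. induction q; [f_equal; lia|].
  replace (t + S q * n)%nat with (t + q * n + n)%nat by lia.
  replace (u + S q * n)%nat with (u + q * n + n)%nat by lia.
  rewrite DD_per; auto.
Qed.

Lemma ee_small n r t : (t < n)%nat -> ee n r t = r (S t).
Proof.
  intros H. unfold ee. rewrite Nat.div_small, Nat.mod_small by lia. simpl. rewrite Nat.add_1_r. ring.
Qed.

Lemma ee_big n r t : (n <= t < n + n)%nat -> ee n r t = - r (S (t - n)).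
Proof.
  intros H. unfold ee.
  replace t with ((t - n) + 1 * n)%nat at 1 2 by lia.
  rewrite Nat.div_add, Nat.Div0.mod_add by lia.
  rewrite Nat.div_small, Nat.mod_small by lia. simpl. rewrite Nat.add_1_r. ring.
Qed.

Lemma DD_pos0 n r1 r2 t k : totally_positive n r1 r2 -> (t < n)%nat -> (1 <= k)%nat -> (k < n)%nat ->
  0 < DD n r1 r2 t (t + k).
Proof.
  intros TP Ht Hk1 Hk2. unfold DD.
  destruct (Nat.lt_ge_cases (t + k) n) as [H|H].
  - rewrite !ee_small by lia. apply (TP (S t) (S (t + k))); lia.
  - rewrite (ee_small n r1 t), (ee_small n r2 t), (ee_big n r1 (t+k)), (ee_big n r2 (t+k)) by lia.
    pose proof (TP (S (t + k - n)) (S t)) as HT. unfold Dij in HT. simpl in HT.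
    assert (0 < r1 (S (t + k - n)) * r2 (S t) - r1 (S t) * r2 (S (t + k - n))) by (apply HT; lia).
    lra.
Qed.

Lemma DD_pos n r1 r2 t k : totally_positive n r1 r2 -> (1 <= k)%nat -> (k < n)%nat ->
  0 < DD n r1 r2 t (t + k).
Proof.
  intros TP Hk1 Hk2.
  assert (Hn : (n <> 0)%nat) by lia.
  pose proof (Nat.div_mod t n Hn) as Hd.
  pose proof (Nat.mod_upper_bound t n Hn) as Hm.
  replace t with (t mod n + (t / n) * n)%nat at 1 by lia.
  replace (t + k)%nat with (t mod n + k + (t / n) * n)%nat by lia.
  rewrite DD_perq by auto. apply DD_pos0; auto.
Qed.

Lemma orbit_iter n k m : (1 <= k)%nat -> (k < n)%nat -> (m < n)%nat ->
  Nat.iter m (sigmaP n) (1%nat, S k) =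
  if Nat.ltb (m + k) n then (S m, S (m + k)) else ((m + k + 1 - n)%nat, S m).
Proof.
  intros Hk1 Hk2. induction m; intros Hm.
  - simpl. destruct (Nat.ltb_spec k n); [reflexivity| lia].
  - simpl Nat.iter. rewrite IHm by lia. unfold sigmaP.
    destruct (Nat.ltb_spec (m + k) n); simpl fst; simpl snd.
    + destruct (Nat.ltb_spec (S (m + k)) n); destruct (Nat.ltb_spec (S m + k) n); try lia;
      f_equal; lia.
    + destruct (Nat.ltb_spec (S m) n); destruct (Nat.ltb_spec (S m + k) n); try lia.
      f_equal; lia.
Qed.

Lemma Dij_orbit n r1 r2 k m : (1 <= k)%nat -> (k < n)%nat -> (m < n)%nat ->
  Dij r1 r2 (Nat.iter m (sigmaP n) (1%nat, S k)) = DD n r1 r2 m (m + k).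
Proof.
  intros Hk1 Hk2 Hm. rewrite orbit_iter by auto. unfold DD, Dij.
  destruct (Nat.ltb_spec (m + k) n); simpl fst; simpl snd.
  - rewrite !ee_small by lia. ring.
  - rewrite (ee_small n r1 m), (ee_small n r2 m), (ee_big n r1 (m+k)), (ee_big n r2 (m+k)) by lia.
    replace (m + k + 1 - n)%nat with (S (m + k - n)) by lia. ring.
Qed.

Lemma orbit_range n k p : (1 <= k)%nat -> (k < n)%nat -> In p (orbit n k) ->
  (1 <= fst p)%nat /\ (fst p < snd p)%nat /\ (snd p <= n)%nat.
Proof.
  intros Hk1 Hk2 Hp. unfold orbit in Hp. apply in_map_iff in Hp.
  destruct Hp as [m [Hm Hin]]. apply in_seq in Hin. subst p.
  rewrite orbit_iter by lia.
  destruct (Nat.ltb_spec (m + k) n); simpl; lia.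
Qed.

Lemma prod_orbit n r1 r2 k : (1 <= k)%nat -> (k < n)%nat ->
  prodR (map (Dij r1 r2) (orbit n k)) = prodR (map (fun t => DD n r1 r2 t (t + k)) (seq 0 n)).
Proof.
  intros Hk1 Hk2. unfold orbit. rewrite map_map. f_equal. apply map_ext_in.
  intros m Hm. apply in_seq in Hm. apply Dij_orbit; lia.
Qed.

Definition LL n r1 r2 k := SL (seq 0 n) (fun t => ln (DD n r1 r2 t (t + k))).

Lemma Dk_exp n r1 r2 k : totally_positive n r1 r2 -> (1 <= k)%nat -> (k < n)%nat ->
  Dk n k r1 r2 = exp (LL n r1 r2 k / INR n).
Proof.
  intros TP Hk1 Hk2. unfold Dk, Rpower. rewrite prod_orbit by auto.
  rewrite ln_prod.
  - unfold LL. f_equal. unfold Rdiv. ring.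
  - intros t _. apply DD_pos; auto.
Qed.

Lemma LL_per_fun n r1 r2 k : (n <> 0)%nat -> forall t,
  (fun t => ln (DD n r1 r2 t (t + k))) (t + n)%nat = (fun t => ln (DD n r1 r2 t (t + k))) t.
Proof.
  intros Hn t. simpl. replace (t + n + k)%nat with (t + k + n)%nat by lia.
  rewrite DD_per; auto.
Qed.

Lemma LL_shift n r1 r2 k j : (n <> 0)%nat ->
  SL (seq 0 n) (fun t => ln (DD n r1 r2 (t + j) (t + j + k))) = LL n r1 r2 k.
Proof.
  intros Hn. unfold LL.
  apply (SL_shift n (fun t => ln (DD n r1 r2 t (t + k)))). apply LL_per_fun; auto.
Qed.

Lemma LL_sym n r1 r2 k : (1 <= k)%nat -> (k < n)%nat -> LL n r1 r2 (n - k) = LL n r1 r2 k.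
Proof.
  intros Hk1 Hk2. rewrite <- (LL_shift n r1 r2 k (n - k)) by lia.
  unfold LL. apply SL_ext. intros t _. f_equal.
  replace (t + (n - k) + k)%nat with (t + n)%nat by lia.
  unfold DD. rewrite !ee_per by lia. ring.
Qed.

Lemma seq_len n : length (seq 0 n) = n.
Proof. apply length_seq. Qed.

Lemma LL_rec n r1 r2 k : totally_positive n r1 r2 -> (2 <= k)%nat -> (k + 2 <= n)%nat ->
  exp ((LL n r1 r2 1 + LL n r1 r2 1) / INR n) + exp ((LL n r1 r2 (k + 1) + LL n r1 r2 (k - 1)) / INR n)
  <= exp ((LL n r1 r2 k + LL n r1 r2 k) / INR n).
Proof.
  intros TP Hk1 Hk2.
  assert (Hn : (n <> 0)%nat) by lia.
  set (A := fun t => DD n r1 r2 t (t + 1) * DD n r1 r2 (t + k) (t + k + 1)).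
  set (B := fun t => DD n r1 r2 t (t + (k + 1)) * DD n r1 r2 (t + 1) (t + 1 + (k - 1))).
  assert (HA : forall t, In t (seq 0 n) -> 0 < A t).
  { intros t _. unfold A. apply Rmult_lt_0_compat; apply DD_pos; auto; lia. }
  assert (HB : forall t, In t (seq 0 n) -> 0 < B t).
  { intros t _. unfold B. apply Rmult_lt_0_compat; apply DD_pos; auto; lia. }
  pose proof (holder (seq 0 n) A B) as H. rewrite seq_len in H.
  assert (Hlen : (0 < n)%nat) by lia.
  specialize (H Hlen HA HB).
  assert (EA : SL (seq 0 n) (fun t => ln (A t)) = LL n r1 r2 1 + LL n r1 r2 1).
  { unfold A. rewrite (SL_ext _ _ (fun t => ln (DD n r1 r2 t (t + 1)) + ln (DD n r1 r2 (t + k) (t + k + 1)))).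
    - rewrite SL_plus. rewrite (LL_shift n r1 r2 1 k) by auto. reflexivity.
    - intros t _. apply ln_mult; apply DD_pos; auto; lia. }
  assert (EB : SL (seq 0 n) (fun t => ln (B t)) = LL n r1 r2 (k + 1) + LL n r1 r2 (k - 1)).
  { unfold B. rewrite (SL_ext _ _ (fun t => ln (DD n r1 r2 t (t + (k + 1))) + ln (DD n r1 r2 (t + 1) (t + 1 + (k - 1))))).
    - rewrite SL_plus. rewrite (LL_shift n r1 r2 (k - 1) 1) by auto. reflexivity.
    - intros t _. apply ln_mult; apply DD_pos; auto; lia. }
  assert (EAB : SL (seq 0 n) (fun t => ln (A t + B t)) = LL n r1 r2 k + LL n r1 r2 k).
  { rewrite (SL_ext _ _ (fun t => ln (DD n r1 r2 t (t + k)) + ln (DD n r1 r2 (t + 1) (t + 1 + k)))).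
    - rewrite SL_plus. rewrite (LL_shift n r1 r2 k 1) by auto. reflexivity.
    - intros t _. rewrite <- ln_mult by (apply DD_pos; auto; lia). f_equal.
      unfold A, B, DD.
      replace (t + (k + 1))%nat with (t + k + 1)%nat by lia.
      replace (t + 1 + (k - 1))%nat with (t + k)%nat by lia.
      replace (t + 1 + k)%nat with (t + k + 1)%nat by lia. ring. }
  rewrite EA, EB, EAB in H. exact H.
Qed.

Lemma INRn_pos n : (3 <= n)%nat -> 0 < INR n.
Proof. intros; apply lt_0_INR; lia. Qed.

Lemma s_pos n k : (3 <= n)%nat -> (1 <= k)%nat -> (k < n)%nat -> 0 < s n k.
Proof.
  intros Hn Hk1 Hk2. unfold s. pose proof (INRn_pos n Hn). pose proof PI_RGT_0.
  assert (1 <= INR k) by (apply (le_INR 1); lia).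
  assert (INR k < INR n) by (apply lt_INR; lia).
  apply sin_gt_0.
  - apply Rdiv_lt_0_compat; nra.
  - apply Rmult_lt_reg_r with (INR n); auto.
    replace (INR k * PI / INR n * INR n) with (INR k * PI) by (field; lra). nra.
Qed.

Lemma s_sym n k : (3 <= n)%nat -> (k <= n)%nat -> s n (n - k) = s n k.
Proof.
  intros Hn Hk. unfold s. pose proof (INRn_pos n Hn).
  rewrite minus_INR by auto. rewrite <- sin_PI_x. f_equal. field. lra.
Qed.

Lemma s_rec n k : (3 <= n)%nat -> (1 <= k)%nat ->
  s n k * s n k = s n (k - 1) * s n (k + 1) + s n 1 * s n 1.
Proof.
  intros Hn Hk. unfold s. pose proof (INRn_pos n Hn).
  rewrite minus_INR, plus_INR by auto. simpl INR.
  set (x := INR k * PI / INR n). set (y := 1 * PI / INR n).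
  replace ((INR k - 1) * PI / INR n) with (x - y) by (unfold x, y; field; lra).
  replace ((INR k + 1) * PI / INR n) with (x + y) by (unfold x, y; field; lra).
  rewrite sin_plus, sin_minus.
  pose proof (sin2_cos2 x); pose proof (sin2_cos2 y). unfold Rsqr in *. nra.
Qed.

Lemma half_facts n : (3 <= n)%nat ->
  (2 * (n / 2) <= n)%nat /\ (n <= 2 * (n / 2) + 1)%nat.
Proof.
  intros Hn. pose proof (Nat.div_mod n 2 ltac:(lia)). pose proof (Nat.mod_upper_bound n 2 ltac:(lia)). lia.
Qed.

Lemma s_mono n k j : (3 <= n)%nat -> (k <= j)%nat -> (2 * j <= n)%nat -> s n k <= s n j.
Proof.
  intros Hn Hkj Hj. unfold s. pose proof (INRn_pos n Hn). pose proof PI_RGT_0.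
  assert (INR k <= INR j) by (apply le_INR; lia).
  assert (0 <= INR k) by apply pos_INR.
  assert (2 * INR j <= INR n) by (replace 2 with (INR 2) by (simpl; lra); rewrite <- mult_INR; apply le_INR; lia).
  assert (Hx : forall a, 0 <= a -> a <= INR j -> - (PI/2) <= a * PI / INR n <= PI / 2).
  { intros a Ha1 Ha2. split.
    - assert (0 <= a * PI / INR n) by (unfold Rdiv; apply Rmult_le_pos; [nra|left; apply Rinv_0_lt_compat; lra]). lra.
    - apply Rmult_le_reg_r with (INR n); auto.
      replace (a * PI / INR n * INR n) with (a * PI) by (field; lra). nra. }
  destruct (Hx (INR k) H2 H1). assert (Hj0 : 0 <= INR j) by lra. destruct (Hx (INR j) Hj0 (Rle_refl _)).
  apply (sin_incr_1 (INR k * PI / INR n) (INR j * PI / INR n)); try assumption.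
  unfold Rdiv; apply Rmult_le_compat_r; [left; apply Rinv_0_lt_compat; lra|]; apply Rmult_le_compat_r; lra.
Qed.

Lemma s_bounds n k : (3 <= n)%nat -> (1 <= k)%nat -> (k < n)%nat ->
  s n 1 <= s n k <= s n (n / 2).
Proof.
  intros Hn Hk1 Hk2. destruct (half_facts n Hn) as [H1 H2].
  destruct (Nat.le_gt_cases k (n / 2)).
  - split; apply s_mono; auto; lia.
  - rewrite <- (s_sym n k) by lia. split; apply s_mono; auto; lia.
Qed.

Lemma argmin (f : nat -> R) N : (1 <= N)%nat ->
  exists k, (1 <= k <= N)%nat /\ forall j, (1 <= j <= N)%nat -> f k <= f j.
Proof.
  intros HN. induction N; [lia|].
  destruct (Nat.eq_dec N 0) as [->|HN0].
  - exists 1%nat. split; [lia|]. intros j Hj. replace j with 1%nat by lia. lra.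
  - destruct IHN as [k [Hk Hmin]]; [lia|].
    destruct (Rle_lt_dec (f k) (f (S N))).
    + exists k. split; [lia|]. intros j Hj. destruct (Nat.eq_dec j (S N)); [subst; auto|]. apply Hmin; lia.
    + exists (S N). split; [lia|]. intros j Hj. destruct (Nat.eq_dec j (S N)); [subst; lra|].
      specialize (Hmin j ltac:(lia)). lra.
Qed.


Lemma seq_lower n (a : nat -> R) : (3 <= n)%nat ->
  (forall k, (1 <= k)%nat -> (k < n)%nat -> 0 < a k) ->
  a (n - 1)%nat = a 1%nat -> a 1%nat = s n 1 ->
  (forall k, (2 <= k)%nat -> (k + 2 <= n)%nat -> a (k - 1)%nat * a (k + 1)%nat + a 1%nat * a 1%nat <= a k * a k) ->
  forall k, (1 <= k)%nat -> (k < n)%nat -> s n k <= a k.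
Proof.
  intros Hn Hpos Hsym H1 Hrec.
  destruct (argmin (fun k => a k / s n k) (n - 1) ltac:(lia)) as [k0 [Hk0 Hmin]].
  assert (Hg : 1 <= a k0 / s n k0).
  { destruct (Rle_lt_dec 1 (a k0 / s n k0)) as [|Hlt]; auto. exfalso.
    set (g := a k0 / s n k0) in *.
    assert (Hs0 : 0 < s n k0) by (apply s_pos; lia).
    assert (Ha0 : 0 < a k0) by (apply Hpos; lia).
    assert (Hg0 : 0 < g) by (apply Rdiv_lt_0_compat; auto).
    assert (Eg : a k0 = g * s n k0) by (unfold g; field; lra).
    destruct (Nat.eq_dec k0 1) as [->|Hk01].
    { unfold g in Hlt. rewrite H1 in Hlt. rewrite Rdiv_diag in Hlt by lra. lra. }
    destruct (Nat.eq_dec k0 (n - 1)) as [->|Hk02].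
    { unfold g in Hlt. rewrite Hsym, H1 in Hlt. replace (n - 1)%nat with (n - 1)%nat in Hlt by lia.
      rewrite (s_sym n 1) in Hlt by lia. rewrite Rdiv_diag in Hlt. lra.
      pose proof (s_pos n 1 ltac:(lia) ltac:(lia) ltac:(lia)); lra. }
    assert (Hsm : 0 < s n (k0 - 1)) by (apply s_pos; lia).
    assert (Hsp : 0 < s n (k0 + 1)) by (apply s_pos; lia).
    assert (Hs1 : 0 < s n 1) by (apply s_pos; lia).
    assert (Am : g * s n (k0 - 1) <= a (k0 - 1)%nat).
    { specialize (Hmin (k0 - 1)%nat ltac:(lia)). fold g in Hmin.
      apply Rmult_le_reg_r with (/ s n (k0 - 1)). apply Rinv_0_lt_compat; auto.
      replace (g * s n (k0 - 1) * / s n (k0 - 1)) with g by (field; lra). exact Hmin. }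
    assert (Ap : g * s n (k0 + 1) <= a (k0 + 1)%nat).
    { specialize (Hmin (k0 + 1)%nat ltac:(lia)). fold g in Hmin.
      apply Rmult_le_reg_r with (/ s n (k0 + 1)). apply Rinv_0_lt_compat; auto.
      replace (g * s n (k0 + 1) * / s n (k0 + 1)) with g by (field; lra). exact Hmin. }
    specialize (Hrec k0 ltac:(lia) ltac:(lia)).
    pose proof (s_rec n k0 Hn ltac:(lia)) as Hr.
    rewrite H1, Eg in Hrec.
    assert (P : g * s n (k0 - 1) * (g * s n (k0 + 1)) <= a (k0 - 1)%nat * a (k0 + 1)%nat).
    { apply Rmult_le_compat; nra. }
    assert (g * g * (s n 1 * s n 1) >= s n 1 * s n 1) by nra.
    assert (Hs11 : 0 < s n 1 * s n 1) by nra.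
    assert (g * g >= 1).
    { apply Rle_ge. apply Rmult_le_reg_r with (s n 1 * s n 1); [auto| lra]. }
    assert (g * g < 1 * 1) by (apply Rmult_le_0_lt_compat; lra). lra. }
  intros k Hk1 Hk2. specialize (Hmin k ltac:(lia)).
  assert (Hs : 0 < s n k) by (apply s_pos; lia).
  assert (1 <= a k / s n k) by lra.
  apply Rmult_le_reg_r with (/ s n k). apply Rinv_0_lt_compat; auto.
  rewrite Rinv_r by lra. exact H.
Qed.

Lemma seq_prop n (a : nat -> R) k : (3 <= n)%nat -> (2 <= k)%nat -> (k + 2 <= n)%nat ->
  a k = s n k -> s n (k - 1) <= a (k - 1)%nat -> s n (k + 1) <= a (k + 1)%nat ->
  a 1%nat = s n 1 ->
  a (k - 1)%nat * a (k + 1)%nat + a 1%nat * a 1%nat <= a k * a k ->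
  a (k - 1)%nat = s n (k - 1).
Proof.
  intros Hn Hk1 Hk2 Ek Hm Hp H1 Hrec.
  pose proof (s_rec n k Hn ltac:(lia)) as Hr.
  assert (Hsm : 0 < s n (k - 1)) by (apply s_pos; lia).
  assert (Hsp : 0 < s n (k + 1)) by (apply s_pos; lia).
  rewrite Ek, H1 in Hrec.
  assert (a (k - 1)%nat * a (k + 1)%nat <= s n (k - 1) * s n (k + 1)) by lra.
  destruct (Rle_lt_dec (a (k - 1)%nat) (s n (k - 1))); [lra|].
  exfalso. assert (s n (k - 1) * s n (k + 1) < a (k - 1)%nat * a (k + 1)%nat) by nra. lra.
Qed.

Lemma prodR_pos (l : list R) : (forall x, In x l -> 0 < x) -> 0 < prodR l.
Proof. induction l; simpl; intros H; [lra|]. apply Rmult_lt_0_compat; auto. Qed.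

Lemma ln_le' a b : 0 < a -> a <= b -> ln a <= ln b.
Proof. intros H1 H2. destruct H2 as [H2|H2]. left; apply ln_increasing; auto. rewrite H2; lra. Qed.

Lemma glist_le (l : list R) M : (forall x, In x l -> 0 < x /\ x <= M) ->
  ln (prodR l) <= INR (length l) * ln M.
Proof.
  induction l as [|a l IH]; intros H; [simpl; rewrite ln_1; lra|].
  change (prodR (a :: l)) with (a * prodR l). change (length (a :: l)) with (S (length l)).
  destruct (H a (or_introl eq_refl)) as [Ha1 Ha2].
  rewrite ln_mult; auto.
  - assert (ln a <= ln M) by (apply ln_le'; lra).
    assert (ln (prodR l) <= INR (length l) * ln M) by (apply IH; intros; apply H; simpl; auto).
    rewrite S_INR. lra.
  - apply prodR_pos. intros x Hx; apply H; simpl; auto.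
Qed.

Lemma glist_ge (l : list R) m : 0 < m -> (forall x, In x l -> m <= x) ->
  INR (length l) * ln m <= ln (prodR l).
Proof.
  intros Hm. induction l as [|a l IH]; intros H; [simpl; rewrite ln_1; lra|].
  change (prodR (a :: l)) with (a * prodR l). change (length (a :: l)) with (S (length l)).
  assert (Ha : m <= a) by (apply H; simpl; auto).
  rewrite ln_mult; try lra.
  - assert (ln m <= ln a) by (apply ln_le'; lra).
    assert (INR (length l) * ln m <= ln (prodR l)) by (apply IH; intros; apply H; simpl; auto).
    rewrite S_INR. lra.
  - apply prodR_pos. intros x Hx. specialize (H x (or_intror Hx)). lra.
Qed.

Lemma glist_eq_ge (l : list R) c : 0 < c -> (forall x, In x l -> c <= x) ->
  ln (prodR l) = INR (length l) * ln c -> forall x, In x l -> x = c.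
Proof.
  intros Hc. induction l as [|a l IH]; intros H E x Hx; [contradiction|].
  change (prodR (a :: l)) with (a * prodR l) in E. change (length (a :: l)) with (S (length l)) in E.
  assert (Ha : c <= a) by (apply H; simpl; auto).
  rewrite ln_mult in E; try lra.
  2:{ apply prodR_pos. intros y Hy. specialize (H y (or_intror Hy)). lra. }
  assert (ln c <= ln a) by (apply ln_le'; lra).
  assert (INR (length l) * ln c <= ln (prodR l)) by (apply glist_ge; auto; intros y Hy; apply H; simpl; auto).
  rewrite S_INR in E.
  assert (Ela : ln a = ln c) by lra.
  destruct Hx as [<-|Hx].
  - apply ln_inv; lra.
  - apply IH; [intros y Hy; apply H; simpl; auto | lra | auto].
Qed.

Lemma glist_eq_le (l : list R) c : (forall x, In x l -> 0 < x /\ x <= c) ->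
  ln (prodR l) = INR (length l) * ln c -> forall x, In x l -> x = c.
Proof.
  induction l as [|a l IH]; intros H E x Hx; [contradiction|].
  change (prodR (a :: l)) with (a * prodR l) in E. change (length (a :: l)) with (S (length l)) in E.
  destruct (H a (or_introl eq_refl)) as [Ha1 Ha2].
  rewrite ln_mult in E; try lra.
  2:{ apply prodR_pos. intros y Hy. destruct (H y (or_intror Hy)); lra. }
  assert (ln a <= ln c) by (apply ln_le'; lra).
  assert (ln (prodR l) <= INR (length l) * ln c) by (apply glist_le; intros y Hy; apply H; simpl; auto).
  rewrite S_INR in E.
  assert (Ela : ln a = ln c) by lra.
  destruct Hx as [<-|Hx].
  - apply ln_inv; lra.
  - apply IH; [intros y Hy; apply H; simpl; auto | lra | auto].
Qed.

Lemma fmax_ge (l : list R) x : In x l -> x <= fold_right Rmax 0 l.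
Proof.
  induction l; simpl; intros H; [contradiction|]. destruct H as [<-|H].
  - apply Rmax_l.
  - eapply Rle_trans; [apply IHl; auto| apply Rmax_r].
Qed.

Lemma fmax_le (l : list R) h : 0 <= h -> (forall x, In x l -> x <= h) -> fold_right Rmax 0 l <= h.
Proof. intros H0; induction l; simpl; intros H; [lra|]. apply Rmax_lub; auto. Qed.

Lemma fmin_le (l : list R) d x : In x l -> fold_right Rmin d l <= x.
Proof.
  induction l; simpl; intros H; [contradiction|]. destruct H as [<-|H].
  - apply Rmin_l.
  - eapply Rle_trans; [apply Rmin_r| apply IHl; auto].
Qed.

Lemma fmin_ge (l : list R) d lo : lo <= d -> (forall x, In x l -> lo <= x) -> lo <= fold_right Rmin d l.
Proof. intros H0; induction l; simpl; intros H; [lra|]. apply Rmin_glb; auto. Qed.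

Lemma fmin_pos (l : list R) d : 0 < d -> (forall x, In x l -> 0 < x) -> 0 < fold_right Rmin d l.
Proof. intros H0; induction l; simpl; intros H; [lra|]. apply Rmin_pos; auto. Qed.

Lemma pairs_in n i j : (1 <= i)%nat -> (i < j)%nat -> (j <= n)%nat -> In (i, j) (pairs n).
Proof.
  intros. unfold pairs. apply in_flat_map. exists i. split.
  - apply in_seq. lia.
  - apply in_map. apply in_seq. lia.
Qed.

Lemma pairs_range n p : In p (pairs n) -> (1 <= fst p)%nat /\ (fst p < snd p)%nat /\ (snd p <= n)%nat.
Proof.
  unfold pairs. intros H. apply in_flat_map in H. destruct H as [i [Hi H]].
  apply in_map_iff in H. destruct H as [j [<- Hj]]. apply in_seq in Hi. apply in_seq in Hj.
  simpl. lia.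
Qed.

Lemma max_ge n r1 r2 i j : (1 <= i)%nat -> (i < j)%nat -> (j <= n)%nat ->
  Dij r1 r2 (i, j) <= maxDelta n r1 r2.
Proof. intros. unfold maxDelta. apply fmax_ge. apply in_map. apply pairs_in; auto. Qed.

Lemma min_le n r1 r2 i j : (1 <= i)%nat -> (i < j)%nat -> (j <= n)%nat ->
  minDelta n r1 r2 <= Dij r1 r2 (i, j).
Proof. intros. unfold minDelta. apply fmin_le. apply in_map. apply pairs_in; auto. Qed.

Lemma min_pos n r1 r2 : (3 <= n)%nat -> totally_positive n r1 r2 -> 0 < minDelta n r1 r2.
Proof.
  intros Hn TP. unfold minDelta. apply fmin_pos.
  - eapply Rlt_le_trans; [apply (TP 1%nat 2%nat); lia| apply max_ge; lia].
  - intros x Hx. apply in_map_iff in Hx. destruct Hx as [[i j] [<- Hp]].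
    apply pairs_range in Hp. simpl in Hp. apply TP; lia.
Qed.

Definition q1 n (i : nat) := cos (INR i * PI / INR n).
Definition q2 n (i : nat) := sin (INR i * PI / INR n).

Lemma Dij_q n i j : (i < j)%nat -> Dij (q1 n) (q2 n) (i, j) = s n (j - i).
Proof.
  intros H. unfold Dij, q1, q2, s. simpl fst; simpl snd.
  rewrite minus_INR by lia.
  replace ((INR j - INR i) * PI / INR n) with (INR j * PI / INR n - INR i * PI / INR n).
  - rewrite sin_minus. ring.
  - unfold Rdiv. ring.
Qed.

Lemma TP_q n : (3 <= n)%nat -> totally_positive n (q1 n) (q2 n).
Proof. intros Hn i j H1 H2 H3. rewrite Dij_q by auto. apply s_pos; lia. Qed.

Lemma Eq_bound n : (3 <= n)%nat -> Eratio n (q1 n) (q2 n) <= s n (n / 2) / s n 1.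
Proof.
  intros Hn.
  assert (Hrng : forall x, In x (map (Dij (q1 n) (q2 n)) (pairs n)) -> s n 1 <= x <= s n (n / 2)).
  { intros x Hx. apply in_map_iff in Hx. destruct Hx as [[i j] [<- Hp]].
    apply pairs_range in Hp. simpl in Hp. rewrite Dij_q by lia. apply s_bounds; lia. }
  assert (Hs1 : 0 < s n 1) by (apply s_pos; lia).
  assert (HM : maxDelta n (q1 n) (q2 n) <= s n (n / 2)).
  { unfold maxDelta. apply fmax_le. pose proof (Hrng _ (in_map _ _ _ (pairs_in n 1 2 ltac:(lia) ltac:(lia) ltac:(lia)))). lra.
    intros x Hx; apply Hrng; auto. }
  assert (Hm : s n 1 <= minDelta n (q1 n) (q2 n)).
  { unfold minDelta. apply fmin_ge.
    - pose proof (Hrng _ (in_map _ _ _ (pairs_in n 1 2 ltac:(lia) ltac:(lia) ltac:(lia)))).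
      eapply Rle_trans; [apply H| apply max_ge; lia].
    - intros x Hx; apply Hrng; auto. }
  assert (HM0 : 0 <= maxDelta n (q1 n) (q2 n)).
  { eapply Rle_trans; [| apply (max_ge n _ _ 1 2); lia]. left. apply TP_q; lia. }
  unfold Eratio. unfold Rdiv.
  apply Rmult_le_compat; auto.
  - left. apply Rinv_0_lt_compat. lra.
  - apply Rinv_le_contravar; auto.
Qed.

Lemma orbit_len n k : length (map (Dij (fun i => 0) (fun i => 0)) (orbit n k)) = n.
Proof. unfold orbit. rewrite !length_map. apply length_seq. Qed.

Lemma orbit_len' n k r1 r2 : length (map (Dij r1 r2) (orbit n k)) = n.
Proof. unfold orbit. rewrite !length_map. apply length_seq. Qed.

Lemma orbit_elems n r1 r2 k : (3 <= n)%nat -> totally_positive n r1 r2 -> (1 <= k)%nat -> (k < n)%nat ->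
  forall x, In x (map (Dij r1 r2) (orbit n k)) ->
  0 < x /\ minDelta n r1 r2 <= x /\ x <= maxDelta n r1 r2.
Proof.
  intros Hn TP Hk1 Hk2 x Hx. apply in_map_iff in Hx. destruct Hx as [[i j] [<- Hp]].
  apply orbit_range in Hp; auto. simpl in Hp.
  split; [apply TP; lia|]. split; [apply min_le; lia| apply max_ge; lia].
Qed.

Lemma Dk_ln n r1 r2 k : (3 <= n)%nat -> ln (Dk n k r1 r2) * INR n = ln (prodR (map (Dij r1 r2) (orbit n k))).
Proof.
  intros Hn. unfold Dk, Rpower. rewrite ln_exp. pose proof (INRn_pos n Hn). field. lra.
Qed.

Lemma exp_div_plus x y N : exp ((x + y) / N) = exp (x / N) * exp (y / N).
Proof. rewrite <- exp_plus. f_equal. unfold Rdiv. ring. Qed.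

Theorem mainTheorem2 (n : nat) (r1 r2 : nat -> R) :
  (3 <= n)%nat ->
  totally_positive n r1 r2 ->
  (* x = rowspan X minimizes Eratio over Gr^{>0}(2,n) *)
  (forall q1 q2 : nat -> R, totally_positive n q1 q2 -> Eratio n r1 r2 <= Eratio n q1 q2) ->
  Dk n 1 r1 r2 = sin (PI / INR n) ->
  (forall k : nat, (1 <= k)%nat -> (k <= n - 1)%nat -> Dk n k r1 r2 = s n k) /\
  (forall i j : nat, (1 <= i)%nat -> (i < j)%nat -> (j <= n)%nat ->
     s n 1 <= Dij r1 r2 (i, j) <= s n (Nat.div n 2)) /\
  (forall p, In p (orbit n 1) -> Dij r1 r2 p = s n 1) /\
  (forall p, In p (orbit n (Nat.div n 2)) -> Dij r1 r2 p = s n (Nat.div n 2)).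
Proof.
  intros Hn TP Hmin HD1.
  assert (Hn0 : (n <> 0)%nat) by lia.
  destruct (half_facts n Hn) as [Hd1 Hd2].
  set (d := (n / 2)%nat) in *.
  assert (E1 : Dk n 1 r1 r2 = s n 1).
  { rewrite HD1. unfold s. replace (INR 1) with 1 by reflexivity. f_equal. unfold Rdiv. ring. }
  set (a := fun k => Dk n k r1 r2).
  assert (Hpos : forall k, (1 <= k)%nat -> (k < n)%nat -> 0 < a k).
  { intros k H1 H2. unfold a. rewrite Dk_exp by auto. apply exp_pos. }
  assert (Hsymk : forall k, (1 <= k)%nat -> (k < n)%nat -> a (n - k)%nat = a k).
  { intros k H1 H2. unfold a. rewrite !Dk_exp by (auto; lia). rewrite LL_sym by auto. reflexivity. }
  assert (Hrec : forall k, (2 <= k)%nat -> (k + 2 <= n)%nat ->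
     a (k - 1)%nat * a (k + 1)%nat + a 1%nat * a 1%nat <= a k * a k).
  { intros k H1 H2. unfold a. rewrite !Dk_exp by (auto; lia).
    rewrite <- !exp_div_plus. rewrite (Rplus_comm (LL n r1 r2 (k - 1))). pose proof (LL_rec n r1 r2 k TP H1 H2). lra. }
  assert (Ha1 : a 1%nat = s n 1) by exact E1.
  assert (Hlow := seq_lower n a Hn Hpos (Hsymk 1%nat ltac:(lia) ltac:(lia)) Ha1 Hrec).
  set (M := maxDelta n r1 r2). set (m := minDelta n r1 r2).
  assert (Hm0 : 0 < m) by (apply min_pos; auto).
  assert (Hs1 : 0 < s n 1) by (apply s_pos; lia).
  assert (Hsd : 0 < s n d) by (apply s_pos; lia).
  assert (Hq := Hmin (q1 n) (q2 n) (TP_q n Hn)).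
  pose proof (Eq_bound n Hn) as Hqb. fold d in Hqb.
  assert (HE : M / m <= s n d / s n 1) by exact (Rle_trans _ _ _ Hq Hqb).
  assert (HE' : M * s n 1 <= s n d * m).
  { apply Rmult_le_compat_r with (r := m * s n 1) in HE; [|nra].
    replace (M / m * (m * s n 1)) with (M * s n 1) in HE by (field; lra).
    replace (s n d / s n 1 * (m * s n 1)) with (s n d * m) in HE by (field; lra). exact HE. }
  assert (DleM : forall k, (1 <= k)%nat -> (k < n)%nat -> a k <= M).
  { intros k H1 H2. unfold a.
    assert (ln (Dk n k r1 r2) * INR n <= INR n * ln M).
    { rewrite Dk_ln by auto. rewrite <- (orbit_len' n k r1 r2) at 2. apply glist_le.
      intros x Hx. destruct (orbit_elems n r1 r2 k Hn TP H1 H2 x Hx) as [Hx1 [Hx2 Hx3]]. change (maxDelta n r1 r2) with M in Hx3. lra. }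
    assert (Hk : 0 < Dk n k r1 r2) by (apply (Hpos k); auto).
    assert (HM : 0 < M) by (unfold M; eapply Rlt_le_trans; [apply (TP 1%nat 2%nat); lia| apply max_ge; lia]).
    assert (ln (Dk n k r1 r2) <= ln M).
    { pose proof (INRn_pos n Hn). apply Rmult_le_reg_r with (INR n); auto. lra. }
    destruct (Rle_lt_dec (Dk n k r1 r2) M); auto.
    pose proof (ln_increasing M (Dk n k r1 r2) HM r). lra. }
  assert (mleD1 : m <= a 1%nat).
  { unfold a.
    assert (INR n * ln m <= ln (Dk n 1 r1 r2) * INR n).
    { rewrite Dk_ln by auto. rewrite <- (orbit_len' n 1 r1 r2) at 1. apply glist_ge; auto.
      intros x Hx. destruct (orbit_elems n r1 r2 1 Hn TP ltac:(lia) ltac:(lia) x Hx) as [Hx1 [Hx2 Hx3]]. change (minDelta n r1 r2) with m in Hx2. lra. }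
    assert (Hk : 0 < Dk n 1 r1 r2) by (apply (Hpos 1%nat); lia).
    assert (ln m <= ln (Dk n 1 r1 r2)).
    { pose proof (INRn_pos n Hn). apply Rmult_le_reg_r with (INR n); auto. lra. }
    destruct (Rle_lt_dec m (Dk n 1 r1 r2)); auto.
    pose proof (ln_increasing (Dk n 1 r1 r2) m Hk r). lra. }
  assert (Hdlow : s n d <= a d) by (apply Hlow; lia).
  assert (HdM : a d <= M) by (apply DleM; lia).
  assert (EM : M = s n d) by nra.
  assert (Em : m = s n 1) by nra.
  assert (Ed : a d = s n d) by lra.
  assert (P1 : forall k, (1 <= k)%nat -> (k <= d)%nat -> a k = s n k).
  { assert (forall t, (t <= d - 1)%nat -> a (d - t)%nat = s n (d - t)).
    { induction t; intros Ht.
      - replace (d - 0)%nat with d by lia. exact Ed.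
      - set (k := (d - t)%nat).
        replace (d - S t)%nat with (k - 1)%nat by (unfold k; lia).
        apply seq_prop; auto; unfold k; try lia.
        + apply IHt. lia.
        + apply Hlow; lia.
        + apply Hlow; lia.
        + apply Hrec; lia. }
    intros k H1 H2. replace k with (d - (d - k))%nat by lia. apply H. lia. }
  assert (P1' : forall k, (1 <= k)%nat -> (k <= n - 1)%nat -> a k = s n k).
  { intros k H1 H2. destruct (Nat.le_gt_cases k d); [apply P1; auto|].
    rewrite <- (Hsymk k) by lia. rewrite <- (s_sym n k) by lia. apply P1; lia. }
  split; [exact P1'|].
  split.
  { intros i j H1 H2 H3. rewrite <- Em, <- EM. split; [apply min_le| apply max_ge]; auto. }
  split.
  { intros p Hp.
    assert (Hx : In (Dij r1 r2 p) (map (Dij r1 r2) (orbit n 1))) by (apply in_map; auto).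
    apply (glist_eq_ge (map (Dij r1 r2) (orbit n 1)) (s n 1) Hs1); auto.
    - intros x Hx'. destruct (orbit_elems n r1 r2 1 Hn TP ltac:(lia) ltac:(lia) x Hx') as [Hx1 [Hx2 Hx3]]. change (minDelta n r1 r2) with m in Hx2. lra.
    - rewrite <- Dk_ln by auto. rewrite orbit_len'. fold (a 1%nat). rewrite Ha1. ring. }
  { intros p Hp.
    assert (Hx : In (Dij r1 r2 p) (map (Dij r1 r2) (orbit n d))) by (apply in_map; auto).
    apply (glist_eq_le (map (Dij r1 r2) (orbit n d)) (s n d)); auto.
    - intros x Hx'. destruct (orbit_elems n r1 r2 d Hn TP ltac:(lia) ltac:(lia) x Hx') as [Hx1 [Hx2 Hx3]]. change (maxDelta n r1 r2) with M in Hx3. lra.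
    - rewrite <- Dk_ln by auto. rewrite orbit_len'. fold (a d). rewrite Ed. ring. }
Qed.
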